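(* Let $n\ge1$ and let $\mathfrak{c}=\{c_{ij}\}_{1\le i<j\le n}$, $\mathfrak{\ell}=\{\ell_1,\dots,\ell_n\}$ be integers. For every $\sigma\in\{+,-\}^n$, the Cartier datum $m_\sigma\in\mathbb{Z}^n$ of the divisor $D(\mathfrak{c},\mathfrak{\ell})$ lies in the closure $\overline{C(\mathfrak{c},\mathfrak{\ell})}$ of $C(\mathfrak{c},\mathfrak{\ell})$ in the Euclidean topology of $\mathbb{R}^n$.
   Context: $A_n(x)=\ell_n$, $A_j(x)=\ell_j-\sum_{k=j+1}^nc_{jk}x_k$ for $1\le j\le n-1$. $C(\mathfrak{c},\mathfrak{\ell})=\{x\in\mathbb{R}^n:$ for each $1\le k\le n$, $A_k(x)<x_k<0$ or $0\le x_k\le A_k(x)\}$. Toric data: $e_j^+$ standard basis of $\mathbb{R}^n$, $e_j^-:=-e_j^+-\sum_{k>j}c_{jk}e_k^+$; $\Sigma_{\mathfrak{c}}$ the fan of cones generated by subsets of $\{e_1^\pm,\dots,e_n^\pm\}$ not containing any $\{e_j^+,e_j^-\}$, with maximal cones $\mathrm{Cone}\{e_1^{\sigma_1},\dots,e_n^{\sigma_n}\}$ indexed by $\sigma\in\{+,-\}^n$; $D(\mathfrak{c},\mathfrak{\ell})=\sum_j\ell_jD_{e_j^-}$ on the toric variety $X(\mathfrak{c})$. The Cartier datum $m_\sigma\in\mathbb{Z}^n$ is the unique vector with $\langle m_\sigma,e_j^{+}\rangle=0$ if $\sigma_j=+$ and $\langle m_\sigma,e_j^-\rangle=-\ell_j$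 if $\sigma_j=-$ (standard inner product); explicitly $m_{\sigma,j}=0$ if $\sigma_j=+$ and $m_{\sigma,j}=A_j(m_{\sigma,j+1},\dots,m_{\sigma,n})$ if $\sigma_j=-$. *)

(* Defs.v *)
From HB Require Import structures.
From mathcomp Require Import all_boot all_order all_algebra.
From mathcomp Require Import all_classical all_reals all_analysis.
Set Implicit Arguments. Unset Strict Implicit. Unset Printing Implicit Defensive.
Import Order.TTheory GRing.Theory Num.Theory.
Local Open Scope ring_scope.

(* Indices 1..n of the paper are represented 0-based by 0..n-1.
   c j k : coefficient c_{jk} (only used for j < k < n);
   l j   : ell_j;
   sig j : sign sigma_j, with true = '+' and false = '-'. *)

Definition Afun {R : realType} (n : nat) (c : nat -> nat -> int) (l : nat -> int)
  (x : 'rV[R]_n) (j : nat) : R :=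
  (l j)%:~R - \sum_(k < n | (j < k)%N) (c j k)%:~R * x ord0 k.

Definition Cset {R : realType} (n : nat) (c : nat -> nat -> int) (l : nat -> int)
  : set 'rV[R]_n :=
  [set x | forall k : 'I_n,
      (Afun c l x k < x ord0 k < 0) \/ (0 <= x ord0 k <= Afun c l x k)].

(* Cartier datum, computed from the last coordinate downwards:
   cartier_tail n c l sig k = [m_{n-k}; ...; m_{n-1}] (0-based),
   with m_j = 0 if sig j, and m_j = A_j(m_{j+1},...,m_{n-1}) otherwise. *)
Fixpoint cartier_tail (n : nat) (c : nat -> nat -> int) (l : nat -> int)
  (sig : nat -> bool) (k : nat) : seq int :=
  match k with
  | 0 => [::]
  | k'.+1 =>
      let j := (n - k'.+1)%N in
      let t := cartier_tail n c l sig k' in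
      (if sig j then 0 else l j - \sum_(i < k') c j (j + 1 + i)%N * t`_i) :: t
  end.

Definition cartier (n : nat) (c : nat -> nat -> int) (l : nat -> int)
  (sig : nat -> bool) : 'rV[int]_n :=
  \row_(k < n) (cartier_tail n c l sig n)`_k.

Definition cartierR {R : realType} (n : nat) (c : nat -> nat -> int) (l : nat -> int)
  (sig : nat -> bool) : 'rV[R]_n :=
  map_mx (fun z : int => z%:~R) (@cartier n c l sig).

(* Main.v *)
Require Import Defs.
From HB Require Import structures.
From mathcomp Require Import all_boot all_order all_algebra.
From mathcomp Require Import all_classical all_reals all_analysis.
From mathcomp Require Import lra zify.
Import Order.TTheory GRing.Theory Num.Theory numFieldNormedType.Exports.
Local Open Scope ring_scope.

Lemma ct_shift n c l sig d : (d <= n)%N -> forall i,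
  (cartier_tail n c l sig n)`_(d + i) = (cartier_tail n c l sig (n - d))`_i.
Proof.
elim: d => [|d IH] Hd i; first by rewrite subn0.
have -> : (d.+1 + i = d + i.+1)%N by rewrite addSnnS.
rewrite IH; last exact: ltnW.
have -> : (n - d = (n - d.+1).+1)%N by rewrite subnSK.
by rewrite -nth_behead.
Qed.

Lemma ct_rec n c l sig j : (j < n)%N ->
  (cartier_tail n c l sig n)`_j =
  if sig j then 0 else l j - \sum_(k < n | (j < k)%N) c j k * (cartier_tail n c l sig n)`_k.
Proof.
move=> Hj.
have := ct_shift n c l sig j (ltnW Hj) 0; rewrite addn0 => ->.
have Hk : (n - j = (n - j.+1).+1)%N by rewrite subnSK.
rewrite Hk /=.
have -> : (n - (n - j.+1).+1 = j)%N by rewrite -Hk subKn // ltnW.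
case: (sig j) => //; congr (_ - _).

set F := fun k => c j k * (cartier_tail n c l sig n)`_k.
have E : \sum_(k < n | (j < k)%N) F k = \sum_(i < n - j.+1) F (j.+1 + i)%N.
  rewrite -(big_mkord (fun k => (j < k)%N) F).
  rewrite (big_cat_nat (n:=j.+1)) //=.
  rewrite big_nat_cond big1 ?add0r; last first.
    by move=> i /andP[/andP[_ Hi] Hji]; rewrite ltnS in Hi; move: Hji; rewrite ltnNge Hi.
  rewrite -{1}[j.+1]add0n big_addn big_mkord.
  apply: eq_big => [i|i _]; last by rewrite addnC.
  by rewrite /= addnS ltnS leq_addl.
rewrite (_ : \sum_(k < n | (j < k)%N) c j k * (cartier_tail n c l sig n)`_k = \sum_(k < n | (j < k)%N) F k) //.
rewrite E; apply: eq_bigr => i _.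
rewrite /F addn1 ct_shift //.
Qed.

Definition Aq {R : realType} n (c : nat -> nat -> int) (l : nat -> int) (y : nat -> R) (j : nat) : R :=
  (l j)%:~R - \sum_(k < n | (j < k)%N) (c j k)%:~R * y (val k).
Definition Cnd {R : realType} n c l (y : nat -> R) j :=
  (Aq n c l y j < y j < 0) \/ (0 <= y j <= Aq n c l y j).
Definition mR (R : realType) n c l sig (j : nat) : R :=
  ((cartier_tail n c l sig n)`_j)%:~R.

Lemma mR_rec (R : realType) n c l sig j : (j < n)%N ->
  mR R n c l sig j = if sig j then 0 else Aq n c l (mR R n c l sig) j.
Proof.
move=> Hj; rewrite /mR ct_rec //; case: (sig j); first by rewrite rmorph0.
rewrite rmorphB rmorph_sum /Aq; congr (_ - _); apply: eq_bigr => i _.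
by rewrite rmorphM.
Qed.

Lemma Aq_ext (R : realType) n c l (y y' : nat -> R) j :
  (forall k, (j < k)%N -> y k = y' k) -> Aq n c l y j = Aq n c l y' j.
Proof.
move=> H; rewrite /Aq; congr (_ - _); apply: eq_bigr => i Hi.
by rewrite H.
Qed.

Lemma nat_aux n k j : (n - k.+1 <= j)%N -> j <> (n - k.+1)%N -> (n - k <= j)%N.
Proof. lia. Qed.

Lemma mainP (R : realType) n c l sig k : (k <= n)%N ->
  forall e : R, 0 < e -> exists y : nat -> R, forall j, (n - k <= j < n)%N ->
    `|mR R n c l sig j - y j| < e /\ Cnd n c l y j.
Proof.
elim: k => [|k IH] Hk e e0.
  by exists (fun _ => 0) => j /andP[H1 H2]; rewrite subn0 leqNgt H2 in H1.
set j0 := (n - k.+1)%N.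
set S := \sum_(i < n | (j0 < i)%N) `|(c j0 i)%:~R : R|.
have S0 : 0 <= S by apply: sumr_ge0 => i _.
set d := e / (2 * (S + 1)).
have d0 : 0 < d by apply: divr_gt0 => //; apply: mulr_gt0 => //; lra.
have [y Hy] := IH (ltnW Hk) (Num.min e d) (ltac:(by rewrite lt_min e0 d0)).
set mm := mR R n c l sig.
set a := Aq n c l y j0.
set b := Aq n c l mm j0.
have Hab : `|b - a| < e / 2.
  have -> : b - a = \sum_(i < n | (j0 < i)%N) (c j0 i)%:~R * (y i - mm i).
    rewrite /b /a /Aq [RHS](eq_bigr _ (fun i _ => mulrBr _ _ _)) sumrB /=; lra.
  have hd : d * (2 * (S + 1)) = e.
    by rewrite /d mulfVK //; apply/eqP => H; lra.
  have Sd : S * d < e / 2 by rewrite -hd; nra.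
  apply: le_lt_trans Sd.
  apply: le_trans (ler_norm_sum _ _ _) _.
  rewrite /S mulr_suml; apply: ler_sum => i Hi.
  rewrite normrM; apply: ler_wpM2l => //.
  have Hi' : (n - k <= i < n)%N.
    rewrite ltn_ord andbT. move: Hi; rewrite /j0 subnS.
    by case: (n - k)%N Hk => //.
  have [H1 _] := Hy i Hi'.
  rewrite distrC; apply: ltW; apply: lt_le_trans H1 _.
  by rewrite ge_min lexx orbT.
move/ltr_normlP: Hab => [Hab1 Hab2].
set v := if sig j0 then (if 0 <= a then 0 else Num.max (a / 2) (- (e / 2)))
         else (if 0 <= a then a else Num.min (a / 2) (a + e / 2)).
exists (fun j => if j == j0 then v else y j) => j /andP[Hj1 Hj2].
have Hext : forall j', (j0 <= j')%N -> Aq n c l (fun j => if j == j0 then v else y j) j' = Aq n c l y j'.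
  move=> j' Hj'; apply: Aq_ext => k' Hk'.
  by rewrite (gtn_eqF (leq_trans _ Hk')).
case: eqP => [->|Hne].
  rewrite /Cnd Hext // eqxx -/a /mm mR_rec; last by rewrite /j0; lia.
  rewrite -/mm -/b /v.
  case: (sig j0); case: (lerP 0 a) => Ha.
  - rewrite subr0 normr0; split; [exact: e0 | right; rewrite lexx Ha //].
  - case: (leP (a / 2) (- (e / 2))) => h;
      (split; [rewrite ltr_norml; apply/andP; split; lra | left; apply/andP; split; lra]).
  - split; first by rewrite ltr_norml; apply/andP; split; lra.
    right; apply/andP; split; lra.
  - case: (leP (a / 2) (a + e / 2)) => h;
      (split; [rewrite ltr_norml; apply/andP; split; lra | left; apply/andP; split; lra]).
have Hj : (n - k <= j)%N.
  by apply: nat_aux Hj1 Hne.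
have [H1 H2] := Hy j (ltac:(by rewrite Hj Hj2)).
have Hne' : (j == j0) = false by apply/eqP.
rewrite /Cnd /= Hext // Hne'.
split; first by apply: lt_le_trans H1 _; rewrite ge_min lexx.
exact: H2.
Qed.

Theorem lemma2p3 (R : realType) (n : nat) (c : nat -> nat -> int) (l : nat -> int)
  (sig : nat -> bool) :
  (1 <= n)%N ->
  closure (@Cset R n c l) (@cartierR R n c l sig).
Proof.
move=> _ B /nbhs_ballP [e e0 He].
have [y Hy] := mainP R n c l sig n (leqnn n) e e0.
have Hy' : forall j : 'I_n, `|mR R n c l sig j - y j| < e /\ Cnd n c l y j.
  by move=> j; apply: Hy; rewrite subnn leq0n ltn_ord.
exists (\row_(k < n) y k); split.
  move=> k.
  have -> : Afun c l (\row_(k < n) y k) k = Aq n c l y k.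
    rewrite /Afun /Aq; congr (_ - _); apply: eq_bigr => i _; by rewrite mxE.
  rewrite mxE; by case: (Hy' k) => _.
apply: He; split => // i j.
rewrite /ball /= !mxE.
by case: (Hy' j).
Qed.
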